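(* Let $\rho_m>0$, $f(\rho)=\rho_m-\rho$, and $0<\bar\rho<\frac{\rho_m}{2}$. There exist $K,c>0$ such that for any $T>0$ and any initial data $\psi_0,\varphi_T$, the linear system \[ \begin{cases} \partial_t\psi=(f(\bar\rho)-2\bar\rho)\partial_x\psi+\bar\rho f^2(\bar\rho)\Delta\varphi, & t\in(0,T),\\ \partial_t\varphi=f(\bar\rho)\partial_x\varphi-\frac{1}{f(\bar\rho)}\psi, & t\in(0,T),\\ \psi(\cdot,0)=\psi_0,\quad \varphi(\cdot,T)=\varphi_T & \end{cases} \] on $\mathbb{R}^2$ admits a solution on $[0,T]$ that satisfies, for all $\xi\in\mathbb{R}^2$ and $t\in[0,T]$, \[ (|\hat\psi|+|\xi\hat\varphi|)(\xi,t)\leqslant K\big(e^{-c|\xi|t}|\hat\psi_0(\xi)|+e^{-c|\xi|(T-t)}|\xi\hat\varphi_T(\xi)|\big). \]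
   Context: $\hat g(\xi,t)$ denotes the Fourier transform in the space variables $(x,y)\in\mathbb{R}^2$, $\xi=(\xi_1,\xi_2)$. A solution is understood frequency by frequency: for each $\xi\neq0$, $t\mapsto(\hat\psi,\hat\varphi)(\xi,t)$ solves the Fourier-transformed ODE system with $\hat\psi(\xi,0)=\hat\psi_0(\xi)$ and $\hat\varphi(\xi,T)=\hat\varphi_T(\xi)$. *)

(* Defs.v *)
From Stdlib Require Import Reals.
From Coquelicot Require Import Coquelicot.
Open Scope R_scope.

Definition flux (rho_m rho : R) : R := rho_m - rho.

Definition xnorm (xi : R * R) : R := sqrt (fst xi ^ 2 + snd xi ^ 2).

(* Fourier symbols (convention  g^(xi) = \int g(x) e^{-i x.xi} dx):
   d/dx -> i xi_1,   Laplacian -> - |xi|^2. *)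

Definition rhs_psi (rho_m rb : R) (xi : R * R) (p q : C) : C :=
  Cplus (Cmult (Cmult Ci (RtoC ((flux rho_m rb - 2 * rb) * fst xi))) p)
        (Cmult (RtoC (- (rb * (flux rho_m rb) ^ 2 * (xnorm xi) ^ 2))) q).

Definition rhs_phi (rho_m rb : R) (xi : R * R) (p q : C) : C :=
  Cplus (Cmult (Cmult Ci (RtoC (flux rho_m rb * fst xi))) q)
        (Cmult (RtoC (- (/ flux rho_m rb))) p).

Definition solves_freq (rho_m rb T : R) (xi : R * R) (a b : C)
    (psi phi : R -> C) : Prop :=
  (forall t, 0 <= t <= T -> continuous psi t /\ continuous phi t) /\
  (forall t, 0 < t < T ->
      is_derive psi t (rhs_psi rho_m rb xi (psi t) (phi t)) /\
      is_derive phi t (rhs_phi rho_m rb xi (psi t) (phi t))) /\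
  psi 0 = a /\ phi T = b.

(* Main.v *)
Require Import Defs.
From Stdlib Require Import Reals Lra.
From Coquelicot Require Import Coquelicot.
From Stdlib Require Import Psatz Lia.
Open Scope R_scope.

Lemma scalC (r:R) (z : C) : @scal R_Ring C_R_ModuleSpace r z = (r * fst z, r * snd z).
Proof. destruct z. reflexivity. Qed.
Lemma plusC (w z : C) : @plus C_R_ModuleSpace w z = Cplus w z.
Proof. reflexivity. Qed.

Lemma is_derive_C (u v : R -> R) (u' v' x : R) :
  is_derive u x u' -> is_derive v x v' ->
  @is_derive R_AbsRing C_R_NormedModule (fun t => (u t, v t)) x (u', v').
Proof.
  intros Hu Hv.
  assert (H := @is_derive_plus R_AbsRing C_R_NormedModule
     (fun t => @scal R_Ring C_R_ModuleSpace (u t) (1,0))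
     (fun t => @scal R_Ring C_R_ModuleSpace (v t) (0,1)) x _ _
     (@is_derive_scal_l R_AbsRing C_R_NormedModule u x u' (1,0) Hu)
     (@is_derive_scal_l R_AbsRing C_R_NormedModule v x v' (0,1) Hv)).
  replace (u', v') with (@plus C_R_ModuleSpace (@scal R_Ring C_R_ModuleSpace u' (1,0)) (@scal R_Ring C_R_ModuleSpace v' (0,1))).
  2:{ rewrite plusC, !scalC. unfold Cplus. simpl. f_equal; ring. }
  eapply is_derive_ext; [|exact H].
  intros t. simpl. rewrite plusC, !scalC. unfold Cplus. simpl. f_equal; ring.
Qed.

Definition cexp (l : C) (t : R) : C :=
  (exp (fst l * t) * cos (snd l * t), exp (fst l * t) * sin (snd l * t)).

Lemma is_derive_mode (K l : C) (x : R) :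
  @is_derive R_AbsRing C_R_NormedModule (fun t => Cmult K (cexp l t)) x
     (Cmult l (Cmult K (cexp l x))).
Proof.
  destruct K as [k1 k2], l as [l1 l2].
  eapply is_derive_ext.
  { intros t. symmetry.
    instantiate (1 := fun t => (k1 * (exp (l1 * t) * cos (l2 * t)) - k2 * (exp (l1 * t) * sin (l2 * t)),
                                k1 * (exp (l1 * t) * sin (l2 * t)) + k2 * (exp (l1 * t) * cos (l2 * t)))).
    unfold Cmult, cexp; simpl. f_equal; ring. }
  match goal with |- is_derive _ _ ?d =>
   replace d with ((l1 * (k1 * (exp (l1 * x) * cos (l2 * x)) - k2 * (exp (l1 * x) * sin (l2 * x))) -
                    l2 * (k1 * (exp (l1 * x) * sin (l2 * x)) + k2 * (exp (l1 * x) * cos (l2 * x)))),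
                   (l1 * (k1 * (exp (l1 * x) * sin (l2 * x)) + k2 * (exp (l1 * x) * cos (l2 * x))) +
                    l2 * (k1 * (exp (l1 * x) * cos (l2 * x)) - k2 * (exp (l1 * x) * sin (l2 * x))))) end.
  2:{ unfold Cmult, cexp; simpl. f_equal; ring. }
  apply is_derive_C; auto_derive; auto; ring.
Qed.

Lemma cexp_0 l : cexp l 0 = 1%C.
Proof. unfold cexp. rewrite !Rmult_0_r, exp_0, cos_0, sin_0. unfold RtoC. f_equal; ring. Qed.

Lemma Cmod_cexp l t : Cmod (cexp l t) = exp (fst l * t).
Proof.
  unfold Cmod, cexp; cbn [fst snd].
  replace ((exp (fst l * t) * cos (snd l * t)) ^ 2 + (exp (fst l * t) * sin (snd l * t)) ^ 2)
    with (exp (fst l * t) ^ 2).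
  - rewrite sqrt_pow2; auto. left; apply exp_pos.
  - assert (H := sin2_cos2 (snd l * t)). unfold Rsqr in H. 
    replace (exp (fst l * t) ^ 2) with (exp (fst l * t) ^ 2 * 1) by ring. rewrite <- H. ring.
Qed.

Section Sol.
Variables (F rb x1 n s T : R).
Hypothesis HF : 0 < F.
Hypothesis Hs2 : s * s = rb * (F * n ^ 2 - rb * x1 ^ 2).

Definition l1 : C := (- s, (F - rb) * x1).
Definition l2 : C := (s, (F - rb) * x1).
Definition e1u : C := (F * s, F * (rb * x1)).
Definition e2u : C := (- F * s, F * (rb * x1)).

Lemma eig1a : Cmult l1 e1u = Cplus (Cmult (Cmult Ci (RtoC ((F - 2 * rb) * x1))) e1u)
                                   (RtoC (- (rb * F ^ 2 * n ^ 2))).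
Proof. unfold l1, e1u, Cmult, Cplus, Ci, RtoC; simpl. f_equal; try ring.
  nra. Qed.

Lemma eig1b : l1 = Cplus (Cmult (Cmult Ci (RtoC (F * x1))) 1%C) (Cmult (RtoC (- / F)) e1u).
Proof. unfold l1, e1u, Cmult, Cplus, Ci, RtoC; simpl. f_equal; field; lra. Qed.
Lemma eig2a : Cmult l2 e2u = Cplus (Cmult (Cmult Ci (RtoC ((F - 2 * rb) * x1))) e2u)
                                   (RtoC (- (rb * F ^ 2 * n ^ 2))).
Proof. unfold l2, e2u, Cmult, Cplus, Ci, RtoC; simpl. f_equal; try ring. nra. Qed.
Lemma eig2b : l2 = Cplus (Cmult (Cmult Ci (RtoC (F * x1))) 1%C) (Cmult (RtoC (- / F)) e2u).
Proof. unfold l2, e2u, Cmult, Cplus, Ci, RtoC; simpl. f_equal; field; lra. Qed.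

Variables (a b : C).
Definition Den : C := Cminus (Cmult e1u (cexp l2 T)) (Cmult e2u (cexp l1 T)).
Definition Acoef : C := Cdiv (Cminus (Cmult a (cexp l2 T)) (Cmult e2u b)) Den.
Definition Bcoef : C := Cdiv (Cminus b (Cmult Acoef (cexp l1 T))) (cexp l2 T).
Definition psiS (t : R) : C := Cplus (Cmult (Cmult Acoef e1u) (cexp l1 t)) (Cmult (Cmult Bcoef e2u) (cexp l2 t)).
Definition phiS (t : R) : C := Cplus (Cmult Acoef (cexp l1 t)) (Cmult Bcoef (cexp l2 t)).

Lemma cexp_neq0 l t : cexp l t <> 0%C.
Proof. intro H. assert (H' := Cmod_cexp l t). rewrite H, Cmod_0 in H'.
  assert (H2 := exp_pos (fst l * t)). lra. Qed.

Hypothesis HDen : Den <> 0%C.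

Lemma psiS_0 : psiS 0 = a.
Proof.
  unfold psiS. rewrite !cexp_0. unfold Bcoef, Acoef.
  assert (Hq := cexp_neq0 l2 T). revert HDen. unfold Den. intro HD.
  field. auto.
Qed.

Lemma phiS_T : phiS T = b.
Proof.
  unfold phiS, Bcoef. assert (Hq := cexp_neq0 l2 T). field. auto.
Qed.

Lemma is_derive_sum (f g : R -> C) x df dg :
  @is_derive R_AbsRing C_R_NormedModule f x df ->
  @is_derive R_AbsRing C_R_NormedModule g x dg ->
  @is_derive R_AbsRing C_R_NormedModule (fun t => Cplus (f t) (g t)) x (Cplus df dg).
Proof. intros. apply (@is_derive_plus R_AbsRing C_R_NormedModule f g); auto. Qed.

Lemma psiS_der x : @is_derive R_AbsRing C_R_NormedModule psiS x
   (Cplus (Cmult (Cmult Ci (RtoC ((F - 2 * rb) * x1))) (psiS x)) (Cmult (RtoC (- (rb * F ^ 2 * n ^ 2))) (phiS x))).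
Proof.
  eapply is_derive_ext.
  { intros t. symmetry. unfold psiS. reflexivity. }
  match goal with |- is_derive _ _ ?d =>
    replace d with (Cplus (Cmult l1 (Cmult (Cmult Acoef e1u) (cexp l1 x))) (Cmult l2 (Cmult (Cmult Bcoef e2u) (cexp l2 x)))) end.
  - apply is_derive_sum; apply is_derive_mode.
  - transitivity (Cplus (Cmult (Cmult Acoef (cexp l1 x)) (Cmult l1 e1u)) (Cmult (Cmult Bcoef (cexp l2 x)) (Cmult l2 e2u))).
    + ring.
    + rewrite eig1a, eig2a. unfold phiS, psiS. ring.
Qed.

Lemma phiS_der x : @is_derive R_AbsRing C_R_NormedModule phiS x
   (Cplus (Cmult (Cmult Ci (RtoC (F * x1))) (phiS x)) (Cmult (RtoC (- / F)) (psiS x))).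
Proof.
  eapply is_derive_ext.
  { intros t. symmetry. unfold phiS. reflexivity. }
  match goal with |- is_derive _ _ ?d =>
    replace d with (Cplus (Cmult l1 (Cmult Acoef (cexp l1 x))) (Cmult l2 (Cmult Bcoef (cexp l2 x)))) end.
  - apply is_derive_sum; apply is_derive_mode.
  - rewrite eig1b at 1. rewrite eig2b at 1. unfold phiS, psiS. ring.
Qed.

Hypothesis Hs : 0 < s.
Definition mm : R := F * sqrt (s ^ 2 + (rb * x1) ^ 2).

Lemma Cmod_e1u : Cmod e1u = mm.
Proof. unfold Cmod, e1u, mm; cbn [fst snd].
  replace ((F * s) ^ 2 + (F * (rb * x1)) ^ 2) with (F ^ 2 * (s ^ 2 + (rb * x1) ^ 2)) by ring.
  rewrite sqrt_mult_alt by (apply pow2_ge_0). rewrite sqrt_pow2 by lra. auto. Qed.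
Lemma Cmod_e2u : Cmod e2u = mm.
Proof. unfold Cmod, e2u, mm; cbn [fst snd].
  replace ((- F * s) ^ 2 + (F * (rb * x1)) ^ 2) with (F ^ 2 * (s ^ 2 + (rb * x1) ^ 2)) by ring.
  rewrite sqrt_mult_alt by (apply pow2_ge_0). rewrite sqrt_pow2 by lra. auto. Qed.

Lemma Den_eq : Den = Cmult (cexp (0, (F - rb) * x1) T)
   (F * s * (exp (s * T) + exp (- s * T)), F * (rb * x1) * (exp (s * T) - exp (- s * T))).
Proof. unfold Den, Cminus, Cplus, Copp, cexp, l1, l2, e1u, e2u, Cmult; cbn [fst snd].
  rewrite Rmult_0_l, exp_0. f_equal; ring. Qed.

Lemma Den_bound : F * s * exp (s * T) <= Cmod Den.
Proof. rewrite Den_eq, Cmod_mult, Cmod_cexp. cbn [fst]. rewrite Rmult_0_l, exp_0, Rmult_1_l.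
  eapply Rle_trans; [|apply re_le_Cmod]. cbn [fst Re].
  assert (0 < exp (- s * T)) by apply exp_pos. assert (0 < F * s) by (apply Rmult_lt_0_compat; lra).
  rewrite Rabs_right; [|left; apply Rmult_lt_0_compat; auto; assert (0 < exp (s*T)) by apply exp_pos; lra].
  nra. Qed.

Lemma Den_neq0 : Den <> 0%C.
Proof. intro H. assert (H1 := Den_bound). rewrite H, Cmod_0 in H1.
  assert (0 < exp (s * T)) by apply exp_pos. assert (0 < F * s) by (apply Rmult_lt_0_compat; lra). nra. Qed.

Lemma exp_inv_sT : exp (- s * T) * exp (s * T) = 1.
Proof. rewrite <- exp_plus. replace (- s * T + s * T) with 0 by ring. apply exp_0. Qed.

Lemma A_bound : Cmod Acoef <= Cmod a / (F * s) + mm * Cmod b * exp (- s * T) / (F * s).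
Proof.
  unfold Acoef. rewrite Cmod_div by exact Den_neq0.
  assert (HD := Den_bound). assert (He := exp_pos (s * T)). assert (He' := exp_pos (- s * T)).
  assert (HFs : 0 < F * s) by (apply Rmult_lt_0_compat; lra).
  assert (Hn : Cmod (Cminus (Cmult a (cexp l2 T)) (Cmult e2u b)) <= Cmod a * exp (s * T) + mm * Cmod b).
  { unfold Cminus. eapply Rle_trans; [apply Cmod_triangle|]. rewrite Cmod_opp, !Cmod_mult, Cmod_cexp, Cmod_e2u.
    unfold l2; cbn [fst]. lra. }
  apply Rle_trans with ((Cmod a * exp (s * T) + mm * Cmod b) / (F * s * exp (s * T))).
  - unfold Rdiv. apply Rmult_le_compat.
    + apply Cmod_ge_0.
    + left; apply Rinv_0_lt_compat; nra.
    + auto.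
    + apply Rinv_le_contravar; nra.
  - right. field_simplify; [|lra|lra]. 
    replace (exp (- s * T)) with (/ exp (s * T)). field. lra.
    rewrite <- (Rmult_1_l (/ exp (s*T))), <- exp_inv_sT. field. lra.
Qed.

Lemma B_bound : Cmod Bcoef <= (Cmod b + Cmod Acoef * exp (- s * T)) * exp (- s * T).
Proof.
  unfold Bcoef. rewrite Cmod_div by apply cexp_neq0. rewrite Cmod_cexp. unfold l2; cbn [fst].
  assert (He := exp_pos (s * T)). assert (He' := exp_pos (- s * T)).
  assert (Hn : Cmod (Cminus b (Cmult Acoef (cexp l1 T))) <= Cmod b + Cmod Acoef * exp (- s * T)).
  { unfold Cminus. eapply Rle_trans; [apply Cmod_triangle|]. rewrite Cmod_opp, !Cmod_mult, Cmod_cexp.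
    unfold l1; cbn [fst]. lra. }
  assert (Hi : exp (- s * T) = / exp (s * T)).
  { rewrite <- (Rmult_1_l (/ exp (s*T))), <- exp_inv_sT. field. lra. }
  rewrite Hi in Hn |- *. unfold Rdiv. apply Rmult_le_compat_r; auto. left; apply Rinv_0_lt_compat; auto.
Qed.

Lemma psi_bound t : Cmod (psiS t) <= mm * (Cmod Acoef * exp (- s * t) + Cmod Bcoef * exp (s * t)).
Proof. unfold psiS. eapply Rle_trans; [apply Cmod_triangle|].
  rewrite !Cmod_mult, !Cmod_cexp, Cmod_e1u, Cmod_e2u. unfold l1, l2; cbn [fst]. right; ring. Qed.

Lemma phi_bound t : Cmod (phiS t) <= Cmod Acoef * exp (- s * t) + Cmod Bcoef * exp (s * t).
Proof. unfold phiS. eapply Rle_trans; [apply Cmod_triangle|].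
  rewrite !Cmod_mult, !Cmod_cexp. unfold l1, l2; cbn [fst]. right; ring. Qed.
End Sol.
Lemma real_est (F s n c0 G mm P Q a bB x X y E1 E2 : R) :
 0 < F -> 0 < c0 -> c0 * n <= s -> 0 < n -> 0 <= G -> 0 <= mm -> mm <= G * n ->
 0 <= P -> 0 <= Q -> 0 <= a -> 0 <= bB -> 0 < x -> x <= 1 -> 0 < y -> y <= 1 -> 0 < X ->
 X * (x * y) = y -> x <= E1 -> y <= E2 ->
 a <= P / (F * s) + mm * Q * (x * y) / (F * s) ->
 bB <= (Q + a * (x * y)) * (x * y) ->
 mm * (a * x + bB * X) + n * (a * x + bB * X) <=
 ((G + 1) * (2 / (F * c0) + 2 * G / (F * c0) + 1)) * (E1 * P + E2 * (n * Q)).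
Proof.
  intros HF Hc Hs Hn HG Hm0 Hm P0 Q0 a0 b0 x0 x1 y0 y1 X0 HX HE1 HE2 Ha Hb.
  assert (s0 : 0 < s) by nra.
  set (u := / (F * s)). set (w := / (F * c0)).
  assert (u0 : 0 < u) by (unfold u; apply Rinv_0_lt_compat; nra).
  assert (w0 : 0 < w) by (unfold w; apply Rinv_0_lt_compat; nra).
  assert (Hun : u * n <= w).
  { unfold u, w. apply Rmult_le_reg_l with (F * s). nra.
    replace (F * s * (/ (F * s) * n)) with n by (field; lra).
    apply Rmult_le_reg_l with (F * c0). nra.
    replace (F * c0 * (F * s * / (F * c0))) with (F * s) by (field; lra). nra. }
  assert (Ha' : a <= u * P + u * mm * Q * (x * y)).
  { unfold u. replace (u * P) with (P / (F * s)) by (unfold u, Rdiv; ring).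
    unfold Rdiv in Ha. lra. }
  clear Ha.
  assert (h1 : bB * X <= Q * y + a * x).
  { apply Rle_trans with ((Q + a * (x * y)) * (x * y) * X). apply Rmult_le_compat_r; lra.
    replace ((Q + a * (x * y)) * (x * y) * X) with ((Q + a * (x * y)) * (X * (x * y))) by ring.
    rewrite HX. assert (a * x * y * y <= a * x). { assert (0 <= a * x) by nra.
      assert (y * y <= 1) by nra. nra. } nra. }
  assert (h2 : a * x <= u * P * x + u * mm * Q * y).
  { apply Rle_trans with ((u * P + u * mm * Q * (x * y)) * x). apply Rmult_le_compat_r; lra.
    assert (0 <= u * mm * Q) by (apply Rmult_le_pos; [apply Rmult_le_pos|]; lra).
    assert (u * mm * Q * y * (x * x) <= u * mm * Q * y * 1).
    { apply Rmult_le_compat_l. apply Rmult_le_pos; lra. nra. } nra. }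
  set (S := a * x + bB * X).
  assert (hS : S <= 2 * (u * P * x) + 2 * (u * mm * Q * y) + Q * y) by (unfold S; lra).
  assert (S0 : 0 <= S) by (unfold S; nra).
  assert (h3 : mm * S + n * S <= (G + 1) * n * S) by nra.
  assert (h4 : (G + 1) * n * S <= (G + 1) * (2 * ((u * n) * P * x) + 2 * ((u * n) * mm * Q * y) + n * Q * y)).
  { apply Rle_trans with ((G + 1) * n * (2 * (u * P * x) + 2 * (u * mm * Q * y) + Q * y)).
    apply Rmult_le_compat_l; nra. right; ring. }
  assert (h5 : (u * n) * P * x <= w * P * E1).
  { assert (0 <= u * n) by nra. apply Rmult_le_compat; [apply Rmult_le_pos; lra|lra| apply Rmult_le_compat_r; lra|lra]. }
  assert (h6 : (u * n) * mm * Q * y <= w * G * (n * Q) * E2).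
  { assert (0 <= u * n) by nra.
    apply Rle_trans with (w * (G * n) * Q * y).
    - apply Rmult_le_compat_r; [lra|]. apply Rmult_le_compat_r; [lra|]. apply Rmult_le_compat; nra.
    - replace (w * G * (n * Q) * E2) with (w * (G * n) * Q * E2) by ring.
      apply Rmult_le_compat_l; [|lra]. apply Rmult_le_pos; [|lra]. apply Rmult_le_pos; nra. }
  assert (h7 : n * Q * y <= (n * Q) * E2) by (apply Rmult_le_compat_l; nra).
  replace (2 / (F * c0)) with (2 * w) by (unfold w, Rdiv; ring).
  replace (2 * G / (F * c0)) with (2 * w * G) by (unfold w, Rdiv; ring).
  fold S.
  assert (0 <= n * Q) by nra.
  assert (0 <= P * E1) by nra. assert (0 <= n * Q * E2) by nra.
  assert (mm * S + n * S <= (G + 1) * (2 * (w * P * E1) + 2 * (w * G * (n * Q) * E2) + n * Q * E2)) by nra.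
  eapply Rle_trans; [exact H2|].
  apply Rle_trans with ((G+1) * ((2*w + 2*w*G+1) * (E1*P + E2*(n*Q)))); [|right; ring].
  apply Rmult_le_compat_l; [lra|].
  assert (0 <= w * (E2 * (n * Q))) by (repeat apply Rmult_le_pos; lra).
  assert (0 <= w * G * (E1 * P)) by (repeat apply Rmult_le_pos; lra).
  assert (0 <= w * G * (n * Q) * E2) by (repeat apply Rmult_le_pos; lra).
  assert (0 <= 2 * w * P * E1) by (repeat apply Rmult_le_pos; lra).
  nra.
Qed.

Lemma exp_mono x y : x <= y -> exp x <= exp y.
Proof. intros H. destruct (Rle_lt_or_eq_dec _ _ H) as [H'|H'].
  left; apply exp_increasing; auto. rewrite H'; lra. Qed.

Theorem lemma5 (rho_m rb : R) (Hm : 0 < rho_m) (Hrb : 0 < rb) (Hrb2 : rb < rho_m / 2) :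
  exists K c : R, 0 < K /\ 0 < c /\
    forall (T : R), 0 < T ->
    forall (psi0_hat phiT_hat : R * R -> C),
    exists psi_hat phi_hat : R * R -> R -> C,
      (forall xi : R * R, xi <> (0, 0) ->
         solves_freq rho_m rb T xi (psi0_hat xi) (phiT_hat xi)
                     (psi_hat xi) (phi_hat xi)) /\
      (forall (xi : R * R) (t : R), 0 <= t <= T ->
         Cmod (psi_hat xi t) + xnorm xi * Cmod (phi_hat xi t) <=
         K * (exp (- c * xnorm xi * t) * Cmod (psi0_hat xi)
              + exp (- c * xnorm xi * (T - t)) * (xnorm xi * Cmod (phiT_hat xi)))).
Proof.
  set (F := flux rho_m rb).
  assert (HF : 0 < F) by (unfold F, flux; lra).
  assert (HFr : 0 < F - rb) by (unfold F, flux; lra).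
  set (c0 := sqrt (rb * (F - rb))).
  assert (Hc0 : 0 < c0) by (apply sqrt_lt_R0; nra).
  set (G := F * sqrt (rb * F)).
  assert (HG : 0 <= G) by (apply Rmult_le_pos; [lra|apply sqrt_pos]).
  set (K := (G + 1) * (2 / (F * c0) + 2 * G / (F * c0) + 1)).
  assert (HK : 0 < K).
  { unfold K. assert (0 < / (F * c0)) by (apply Rinv_0_lt_compat; nra).
    apply Rmult_lt_0_compat; [lra|]. unfold Rdiv.
    assert (0 <= 2 * G * / (F * c0)) by (apply Rmult_le_pos; lra). lra. }
  exists K, c0. split; [exact HK|]. split; [exact Hc0|].
  intros T HT psi0 phiT.
  set (sv := fun xi : R * R => sqrt (rb * (F * xnorm xi ^ 2 - rb * fst xi ^ 2))).
  exists (fun xi => if Req_EM_T (xnorm xi) 0 then (fun _ : R => RtoC 0)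
                    else psiS F rb (fst xi) (sv xi) T (psi0 xi) (phiT xi)).
  exists (fun xi => if Req_EM_T (xnorm xi) 0 then (fun _ : R => RtoC 0)
                    else phiS F rb (fst xi) (sv xi) T (psi0 xi) (phiT xi)).
  assert (Hfacts : forall xi, xnorm xi <> 0 ->
     0 < xnorm xi /\ 0 < sv xi /\
     sv xi * sv xi = rb * (F * xnorm xi ^ 2 - rb * fst xi ^ 2) /\
     c0 * xnorm xi <= sv xi /\ mm F rb (fst xi) (sv xi) = G * xnorm xi).
  { intros xi Hn.
    assert (Hn0 : 0 <= xnorm xi) by (unfold xnorm; apply sqrt_pos).
    assert (Hn1 : 0 < xnorm xi) by lra.
    assert (Hn2 : xnorm xi ^ 2 = fst xi ^ 2 + snd xi ^ 2).
    { unfold xnorm. rewrite pow2_sqrt; auto. apply Rplus_le_le_0_compat; apply pow2_ge_0. }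
    assert (Hin : (F - rb) * xnorm xi ^ 2 <= F * xnorm xi ^ 2 - rb * fst xi ^ 2).
    { rewrite Hn2. assert (0 <= rb * snd xi ^ 2) by (apply Rmult_le_pos; [lra|apply pow2_ge_0]). lra. }
    assert (Hin0 : 0 < (F - rb) * xnorm xi ^ 2) by (apply Rmult_lt_0_compat; [lra|apply pow_lt; lra]).
    assert (Hss : sv xi * sv xi = rb * (F * xnorm xi ^ 2 - rb * fst xi ^ 2)).
    { unfold sv. apply sqrt_sqrt. apply Rmult_le_pos; lra. }
    assert (Hsp : 0 < sv xi) by (unfold sv; apply sqrt_lt_R0; apply Rmult_lt_0_compat; lra).
    split; [lra|]. split; [lra|]. split; [exact Hss|]. split.
    - unfold c0. rewrite <- (sqrt_pow2 (xnorm xi)) by lra.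
      rewrite <- sqrt_mult_alt by (apply Rmult_le_pos; lra). unfold sv. apply sqrt_le_1_alt.
      rewrite Rmult_assoc. apply Rmult_le_compat_l; lra.
    - unfold mm, G. rewrite Rmult_assoc. f_equal.
      rewrite <- (sqrt_pow2 (xnorm xi)) by lra.
      rewrite <- sqrt_mult_alt by (apply Rmult_le_pos; lra). f_equal.
      replace (sv xi ^ 2) with (sv xi * sv xi) by ring. rewrite Hss. ring. }
  split.
  - intros xi Hxi.
    destruct (Req_EM_T (xnorm xi) 0) as [Hn|Hn].
    { exfalso. apply Hxi. unfold xnorm in Hn. apply sqrt_eq_0 in Hn; [|apply Rplus_le_le_0_compat; apply pow2_ge_0].
      destruct xi as [x y]. simpl in Hn.
      assert (0 <= x ^ 2) by apply pow2_ge_0. assert (0 <= y ^ 2) by apply pow2_ge_0.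
      assert (x ^ 2 = 0) by lra. assert (y ^ 2 = 0) by lra.
      assert (x = 0) by (apply Rsqr_0_uniq; unfold Rsqr; lra). assert (y = 0) by (apply Rsqr_0_uniq; unfold Rsqr; lra). subst; reflexivity. }
    destruct (Hfacts xi Hn) as (Hn1 & Hs & Hss & Hcs & Hmm).
    assert (HD : Den F rb (fst xi) (sv xi) T <> 0%C) by (apply Den_neq0; auto).
    assert (Hd : forall t,
      is_derive (psiS F rb (fst xi) (sv xi) T (psi0 xi) (phiT xi)) t
        (rhs_psi rho_m rb xi (psiS F rb (fst xi) (sv xi) T (psi0 xi) (phiT xi) t)
                             (phiS F rb (fst xi) (sv xi) T (psi0 xi) (phiT xi) t)) /\
      is_derive (phiS F rb (fst xi) (sv xi) T (psi0 xi) (phiT xi)) t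
        (rhs_phi rho_m rb xi (psiS F rb (fst xi) (sv xi) T (psi0 xi) (phiT xi) t)
                             (phiS F rb (fst xi) (sv xi) T (psi0 xi) (phiT xi) t))).
    { intros t. split.
      - unfold rhs_psi. apply (psiS_der F rb (fst xi) (xnorm xi) (sv xi) T HF Hss).
      - unfold rhs_phi. apply (phiS_der F rb (fst xi) (sv xi) T HF). }
    split; [|split; [|split]].
    + intros t _. split.
      * exact (@ex_derive_continuous R_AbsRing C_R_NormedModule _ t (ex_intro _ _ (proj1 (Hd t)))).
      * exact (@ex_derive_continuous R_AbsRing C_R_NormedModule _ t (ex_intro _ _ (proj2 (Hd t)))).
    + intros t _. apply Hd.
    + apply psiS_0; auto.
    + apply phiS_T.
  - intros xi t Ht.
    assert (Hn0 : 0 <= xnorm xi) by (unfold xnorm; apply sqrt_pos).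
    destruct (Req_EM_T (xnorm xi) 0) as [Hn|Hn].
    { rewrite Cmod_0. rewrite Rmult_0_r, Rplus_0_r.
      apply Rmult_le_pos; [lra|]. apply Rplus_le_le_0_compat; apply Rmult_le_pos;
      try (left; apply exp_pos); try apply Cmod_ge_0. apply Rmult_le_pos; auto; apply Cmod_ge_0. }
    destruct (Hfacts xi Hn) as (Hn1 & Hs & Hss & Hcs & Hmm).
    set (s := sv xi) in *. set (x1 := fst xi) in *. set (n := xnorm xi) in *.
    assert (HD : Den F rb x1 s T <> 0%C) by (apply Den_neq0; auto).
    assert (HA := A_bound F rb x1 s T HF (psi0 xi) (phiT xi) Hs).
    assert (HB := B_bound F rb x1 s T (psi0 xi) (phiT xi)).
    assert (Hpsi := psi_bound F rb x1 s T HF (psi0 xi) (phiT xi) t).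
    assert (Hphi := phi_bound F rb x1 s T (psi0 xi) (phiT xi) t).
    assert (HxyT : exp (- s * t) * exp (- s * (T - t)) = exp (- s * T)).
    { rewrite <- exp_plus. f_equal. ring. }
    assert (HX : exp (s * t) * (exp (- s * t) * exp (- s * (T - t))) = exp (- s * (T - t))).
    { rewrite <- !exp_plus. f_equal. ring. }
    rewrite <- HxyT in HA, HB.
    rewrite Hmm in HA, Hpsi.
    eapply Rle_trans.
    2:{ apply (real_est F s n c0 G (G * n) (Cmod (psi0 xi)) (Cmod (phiT xi))
          (Cmod (Acoef F rb x1 s T (psi0 xi) (phiT xi))) (Cmod (Bcoef F rb x1 s T (psi0 xi) (phiT xi)))
          (exp (- s * t)) (exp (s * t)) (exp (- s * (T - t)))); auto;
        try apply Cmod_ge_0; try apply exp_pos; try lra.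
        - apply Rmult_le_pos; lra.
        - apply Rle_trans with (exp 0); [apply exp_mono; nra | rewrite exp_0; lra].
        - apply Rle_trans with (exp 0); [apply exp_mono; nra | rewrite exp_0; lra].
        - apply exp_mono. nra.
        - apply exp_mono. nra. }
    assert (0 <= n * Cmod (phiS F rb x1 s T (psi0 xi) (phiT xi) t) <=
       n * (Cmod (Acoef F rb x1 s T (psi0 xi) (phiT xi)) * exp (- s * t) +
            Cmod (Bcoef F rb x1 s T (psi0 xi) (phiT xi)) * exp (s * t))).
    { split. apply Rmult_le_pos; [lra|apply Cmod_ge_0]. apply Rmult_le_compat_l; lra. }
    lra.
Qed.
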